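(* Let $A\in\mathbb{R}^{n\times n}$ be Hurwitz, $B\in\mathbb{R}^{n\times m}$, $C\in\mathbb{R}^{p\times n}$, $\hat A\in\mathbb{R}^{r\times r}$, $\hat B\in\mathbb{R}^{r\times m}$, $\hat C\in\mathbb{R}^{p\times r}$, $\bar T>0$. Let $P_{\bar T}, P_{2, \bar T}$ and $\hat P_{\bar T}$ be the solutions to $$A P_{\bar T}+ P_{\bar T} A^T =-B B^T+e^{A \bar T}B B^T e^{A^T \bar T},\quad A P_{2, {\bar T}}+ P_{2, {\bar T}} \hat A^T =-B \hat B^T+e^{A \bar T}B \hat B^T e^{\hat A^T \bar T},$$ $$\hat A \hat P_{\bar T}+\hat P_{\bar T} \hat A^T =-\hat B \hat B^T+e^{\hat A \bar T}\hat B \hat B^T e^{\hat A^T \bar T},$$ respectively. Then $$\operatorname{tr}(C P_{\bar T} C^T)=\operatorname{tr}(B^T Q_{\bar T} B),\quad \operatorname{tr}(\hat C \hat P_{\bar T} \hat C^T)=\operatorname{tr}(\hat B^T \hat Q_{\bar T} \hat B),\quad \operatorname{tr}(C P_{2, \bar T} \hat C^T)=\operatorname{tr}(\hat B^T Q_{2, \bar T} B),$$ where the matrices $Q_{\bar T}, Q_{2, \bar T}$ and $\hat Q_{\bar T}$ satisfy $$A^T Q_{\bar T}+ Q_{\bar T} A =-C^T C+e^{A^T \bar T}C^T C e^{A \bar T},\quad \hat A^T Q_{2, {\bar T}}+ Q_{2, {\bar T}} A =-\hat C^T C+e^{\hat A^T \bar T} \hat C^T C e^{A \bar T},$$ $$\hat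 A^T \hat Q_{\bar T}+\hat Q_{\bar T} \hat A =-\hat C^T \hat C+e^{\hat A^T \bar T}\hat C^T \hat C e^{\hat A \bar T}.$$
   Context: $\operatorname{tr}$ denotes the trace of a matrix. *)

(* Defs.v *)
From HB Require Import structures.
From mathcomp Require Import all_boot all_order all_algebra.
From mathcomp Require Import all_classical all_reals all_analysis.
From mathcomp Require Import complex.
Set Implicit Arguments. Unset Strict Implicit. Unset Printing Implicit Defensive.
Import Order.TTheory GRing.Theory Num.Theory.
Import numFieldNormedType.Exports.
Local Open Scope classical_set_scope.
Local Open Scope ring_scope.

Definition expmx (R : realType) (n : nat) (M : 'M[R]_n) : 'M[R]_n :=
  lim (series (fun k : nat => (k`!%:R)^-1 *: (M ^+ k)) @ \oo).

Definition hurwitz (R : realType) (n : nat) (A : 'M[R]_n) : Prop :=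
  forall z : R[i],
    root (char_poly (map_mx (fun x : R => x%:C%C) A)) z -> complex.Re z < 0.

(* Main.v *)
Require Import Defs.
From HB Require Import structures.
From mathcomp Require Import all_boot all_order all_algebra.
From mathcomp Require Import all_classical all_reals all_analysis.
Import Order.TTheory GRing.Theory Num.Theory.
Import numFieldNormedType.Exports.
Local Open Scope classical_set_scope.
Local Open Scope ring_scope.
Set Implicit Arguments. Unset Strict Implicit.
Section S.
Variable R : realType.
HB.instance Definition _ (m n : nat) := Uniform_isComplete.Build 'M[R]_(m, n) (@mx_complete R m n).

Lemma mx_entry_le m k (M : 'M[R]_(m,k)) i j : `|M i j| <= `|M|.
Proof.
have /mapP[x Hx ->] : `|M i j| \in [seq `|M x.1 x.2| | x : 'I_m * 'I_k].
  by apply/mapP; exists (i, j) => //=; rewrite mem_enum.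
by rewrite [leRHS]/Num.Def.normr /= mx_normrE; apply/bigmax_geP; right => /=; exists x.
Qed.

Lemma mx_norm_le m k (M : 'M[R]_(m,k)) c : 0 <= c ->
  (forall i j, `|M i j| <= c) -> `|M| <= c.
Proof.
move=> c0 H; rewrite [leLHS]/Num.Def.normr /= mx_normrE.
by apply: bigmax_le => // [[i j]] _; exact: H.
Qed.

Lemma mulmx_norm a b c (X : 'M[R]_(a,b)) (Y : 'M[R]_(b,c)) :
  `|X *m Y| <= b%:R * `|X| * `|Y|.
Proof.
apply: mx_norm_le; first by rewrite !mulr_ge0.
move=> i j; rewrite mxE; apply: le_trans (ler_norm_sum _ _ _) _.
apply: le_trans (_ : _ <= \sum_(l < b) (`|X| * `|Y|)) _.
  by apply: ler_sum => l _; rewrite normrM; apply: ler_pM => //; exact: mx_entry_le.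
by rewrite sumr_const card_ord -mulr_natl -!mulrA mul1r mulr_natl.
Qed.

Lemma trmx_norm a b (X : 'M[R]_(a,b)) : `|X^T| <= `|X|.
Proof. by apply: mx_norm_le => // i j; rewrite mxE; exact: mx_entry_le. Qed.

Lemma pow_norm n (M : 'M[R]_n) k : `|M ^+ k| <= (n%:R * `|M|) ^+ k.
Proof.
elim: k => [|k IH].
  rewrite expr0; apply: mx_norm_le => // i j; rewrite mxE.
  by case: (i == j); rewrite ?normr1 ?normr0.
rewrite exprS -mulmxE exprS; apply: le_trans (mulmx_norm _ _) _.
by apply: ler_wpM2l => //; rewrite mulr_ge0.
Qed.

Definition eterm n (M : 'M[R]_n) := fun k : nat => (k`!%:R)^-1 *: (M ^+ k).

Lemma expmx_cvg n (M : 'M[R]_n) : series (eterm M) @ \oo --> expmx M.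
Proof.
rewrite /expmx; apply: normed_cvg.
apply: (@series_le_cvg _ _ (exp_coeff (n%:R * `|M|))).
- by move=> k /=.
- by move=> k; rewrite /exp_coeff divr_ge0 // exprn_ge0 // mulr_ge0.
- move=> k /=; rewrite /eterm /exp_coeff normrZ ger0_norm ?invr_ge0 // mulrC.
  by apply: ler_wpM2r; [rewrite invr_ge0 | exact: pow_norm].
- exact: is_cvg_series_exp_coeff.
Qed.

Lemma lip_cvg (V W : normedModType R) (f : V -> W) (k : R) (u : nat -> V) (l : V) :
  0 < k -> (forall x y, `|f x - f y| <= k * `|x - y|) ->
  u @ \oo --> l -> (fun N => f (u N)) @ \oo --> f l.
Proof.
move=> k0 fL /cvgrPdist_lt ul; apply/cvgrPdist_lt => e e0.
have := ul (e / k) (divr_gt0 e0 k0); apply: filterS => N hN.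
apply: le_lt_trans (fL _ _) _; rewrite mulrC -ltr_pdivlMr //.
Qed.


Lemma expmx_comm n (M X : 'M[R]_n) : X * M = M * X -> X * expmx M = expmx M * X.
Proof.
move=> XM.
have cS := @expmx_cvg n M.
have k0 : 0 < n%:R * `|X| + 1 :> R by rewrite ltr_wpDl // mulr_ge0.
have L1 : forall Y Z : 'M[R]_n, `|X * Y - X * Z| <= (n%:R * `|X| + 1) * `|Y - Z|.
  move=> Y Z; rewrite -mulrBr -mulmxE; apply: le_trans (mulmx_norm _ _) _.
  by apply: ler_wpM2r => //; rewrite lerDl.
have L2 : forall Y Z : 'M[R]_n, `|Y * X - Z * X| <= (n%:R * `|X| + 1) * `|Y - Z|.
  move=> Y Z; rewrite -mulrBl -mulmxE; apply: le_trans (mulmx_norm _ _) _.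
  by rewrite [_ * `|X|]mulrC mulrA; apply: ler_wpM2r => //; rewrite mulrC lerDl.
have h1 := lip_cvg k0 L1 cS.
have h2 := lip_cvg k0 L2 cS.
have heq : (fun N => X * series (eterm M) N) = (fun N => series (eterm M) N * X).
  apply: funext => N; rewrite /series /= mulr_sumr mulr_suml.
  by apply: eq_bigr => k _; rewrite /eterm -!mulmxE -scalemxAr -scalemxAl !mulmxE (commrX k XM).
rewrite /= heq in h1.
exact: (cvg_unique _ h1 h2).
Qed.

Lemma trmx_expn n (M : 'M[R]_n) k : (M ^+ k)^T = M^T ^+ k.
Proof.
elim: k => [|k IH]; first by rewrite !expr0 trmx1.
by rewrite exprS exprSr -mulmxE trmx_mul IH mulmxE.
Qed.

Lemma expmx_tr n (M : 'M[R]_n) : expmx M^T = (expmx M)^T.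
Proof.
have cS := @expmx_cvg n M.
have k0 : 0 < 1 :> R by [].
have L : forall Y Z : 'M[R]_n, `|Y^T - Z^T| <= 1 * `|Y - Z|.
  move=> Y Z; rewrite mul1r -linearB; exact: trmx_norm.
have h1 := lip_cvg k0 L cS.
have heq : (fun N => (series (eterm M) N)^T) = series (eterm M^T).
  apply: funext => N; rewrite /series /= linear_sum.
  by apply: eq_bigr => k _; rewrite /eterm linearZ /= trmx_expn.
rewrite heq in h1.
exact: (cvg_unique _ (@expmx_cvg n M^T) h1).
Qed.


Lemma surj_lin a b (f : {linear 'M[R]_(a,b) -> 'M[R]_(a,b)}) :
  (forall Y, f Y = 0 -> Y = 0) -> forall Z, exists X, f X = Z.
Proof.
move=> inj Z.
have fr : row_free (lin_mx f).
  apply: inj_row_free => v; rewrite mul_rV_lin => /eqP; rewrite mxvec_eq0 => /eqP /inj h.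
  by rewrite -[v]vec_mxK h linear0.
have u : lin_mx f \in unitmx by rewrite -row_free_unit.
exists (vec_mx (mxvec Z *m invmx (lin_mx f))).
by rewrite -mx_rV_lin (mulmxKV u) mxvecK.
Qed.

Lemma tr_adj a b (A : 'M[R]_a) (Ah : 'M[R]_b) (X : 'M[R]_(a,b)) (Q : 'M[R]_(b,a)) :
  \tr (Q *m (A *m X + X *m Ah^T)) = \tr ((Ah^T *m Q + Q *m A) *m X).
Proof.
rewrite mulmxDr mulmxDl !mxtraceD addrC; congr (_ + _); last by rewrite mulmxA.
by rewrite mulmxA mxtrace_mulC mulmxA.
Qed.

Lemma key a b c p (A : 'M[R]_a) (Ah : 'M[R]_b) (B : 'M[R]_(a,c)) (Bh : 'M[R]_(b,c))
  (C : 'M[R]_(p,a)) (Ch : 'M[R]_(p,b)) (E : 'M[R]_a) (F : 'M[R]_b)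
  (P : 'M[R]_(a,b)) (Q : 'M[R]_(b,a)) :
  A *m E = E *m A -> F *m Ah^T = Ah^T *m F ->
  (forall X, A *m X + X *m Ah^T = - (B *m Bh^T) + E *m B *m Bh^T *m F <-> X = P) ->
  Ah^T *m Q + Q *m A = - (Ch^T *m C) + F *m Ch^T *m C *m E ->
  \tr (C *m P *m Ch^T) = \tr (Bh^T *m Q *m B).
Proof.
move=> AE FA HP HQ.
pose S := (mulmx A \+ mulmxr Ah^T : {linear 'M[R]_(a,b) -> 'M[R]_(a,b)}).
have SE X : S X = A *m X + X *m Ah^T by [].
have hP := (HP P).2 erefl.
have inj Y : S Y = 0 -> Y = 0.
  move=> SY; have e : P + Y = P.
    by apply/HP; rewrite -SE linearD SY addr0 SE.
  by rewrite -(addKr P Y) e addNr.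
have [P0 HP0] := surj_lin inj (- (B *m Bh^T)).
have Hc : S (E *m P0 *m F) = E *m S P0 *m F.
  rewrite !SE mulmxDr mulmxDl !mulmxA AE; congr (_ + _).
  by rewrite -!mulmxA FA.
have PE : P = P0 - E *m P0 *m F.
  apply/esym/HP; rewrite -SE linearB Hc HP0 mulmxN mulNmx opprK !mulmxA.
  by [].
have HB : B *m Bh^T = - (A *m P0 + P0 *m Ah^T) by rewrite -SE HP0 opprK.
have t1 : \tr (C *m P *m Ch^T) = \tr (Ch^T *m C *m P) by rewrite [in LHS]mxtrace_mulC mulmxA.
have t2 : \tr (Bh^T *m Q *m B) = \tr (Q *m (B *m Bh^T)).
  by rewrite [in LHS]mxtrace_mulC [in LHS]mulmxA [in LHS]mxtrace_mulC.
rewrite t1 t2 HB mulmxN linearN /= tr_adj HQ.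
rewrite PE mulmxBr mulmxDl mulNmx linearB linearD linearN /= opprD opprK.
by rewrite !mulmxA [in X in _ - X = _]mxtrace_mulC !mulmxA.
Qed.


Lemma comm_exp n (A : 'M[R]_n) (T : R) : A *m expmx (T *: A) = expmx (T *: A) *m A.
Proof.
rewrite mulmxE; apply: expmx_comm.
by rewrite -!mulmxE -scalemxAr -scalemxAl.
Qed.

End S.
Unset Implicit Arguments.


Theorem proposition2p3 (R : realType) (n m p r : nat)
  (A : 'M[R]_n) (B : 'M[R]_(n, m)) (C : 'M[R]_(p, n))
  (Ah : 'M[R]_r) (Bh : 'M[R]_(r, m)) (Ch : 'M[R]_(p, r))
  (T : R)
  (P : 'M[R]_n) (P2 : 'M[R]_(n, r)) (Ph : 'M[R]_r)
  (Q : 'M[R]_n) (Q2 : 'M[R]_(r, n)) (Qh : 'M[R]_r) :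
  hurwitz A -> 0 < T ->
  (* P_T is the solution of its Lyapunov equation *)
  (forall X : 'M[R]_n,
     A *m X + X *m A^T
       = - (B *m B^T) + expmx (T *: A) *m B *m B^T *m expmx (T *: A^T)
     <-> X = P) ->
  (* P_{2,T} is the solution of its Sylvester equation *)
  (forall X : 'M[R]_(n, r),
     A *m X + X *m Ah^T
       = - (B *m Bh^T) + expmx (T *: A) *m B *m Bh^T *m expmx (T *: Ah^T)
     <-> X = P2) ->
  (* \hat P_T is the solution of its Lyapunov equation *)
  (forall X : 'M[R]_r,
     Ah *m X + X *m Ah^T
       = - (Bh *m Bh^T) + expmx (T *: Ah) *m Bh *m Bh^T *m expmx (T *: Ah^T)
     <-> X = Ph) ->
  (* Q_T, Q_{2,T}, \hat Q_T satisfy their equations *)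
  A^T *m Q + Q *m A
    = - (C^T *m C) + expmx (T *: A^T) *m C^T *m C *m expmx (T *: A) ->
  Ah^T *m Q2 + Q2 *m A
    = - (Ch^T *m C) + expmx (T *: Ah^T) *m Ch^T *m C *m expmx (T *: A) ->
  Ah^T *m Qh + Qh *m Ah
    = - (Ch^T *m Ch) + expmx (T *: Ah^T) *m Ch^T *m Ch *m expmx (T *: Ah) ->
  [/\ \tr (C *m P *m C^T) = \tr (B^T *m Q *m B),
      \tr (Ch *m Ph *m Ch^T) = \tr (Bh^T *m Qh *m Bh)
    & \tr (C *m P2 *m Ch^T) = \tr (Bh^T *m Q2 *m B)].

Proof.
move=> _ _ HP HP2 HPh HQ HQ2 HQh; split.
- apply: (key (comm_exp A T) (esym (comm_exp A^T T)) HP HQ).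
- apply: (key (comm_exp Ah T) (esym (comm_exp Ah^T T)) HPh HQh).
- apply: (key (comm_exp A T) (esym (comm_exp Ah^T T)) HP2 HQ2).
Qed.
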